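(* For every $\beta\in\mathbb N^d\setminus\{0\}$, $$\sum_{r=1}^{|\beta|}\binom{|\beta|}{r}\sum_{p(\beta,r)}\frac{r!}{k_1!\cdots k_{|\beta|}!}\le2^{|\beta|(d+1)}.$$
   Context: For $\alpha,\gamma\in\mathbb N^d$ write $\gamma\prec\alpha$ if either $|\gamma|<|\alpha|$; or $|\gamma|=|\alpha|$ and $\gamma_1<\alpha_1$; or $|\gamma|=|\alpha|$, $\gamma_1=\alpha_1,\dots,\gamma_k=\alpha_k$ and $\gamma_{k+1}<\alpha_{k+1}$ for some $1\le k<d$. For $\beta\in\mathbb N^d$ with $n=|\beta|\ge1$ and $1\le r\le n$, $p(\beta,r)$ is the set of tuples $(k_1,\dots,k_n;\beta^{(1)},\dots,\beta^{(n)})$ with $k_j\in\mathbb N$, $\beta^{(j)}\in\mathbb N^d$, such that for some $1\le s\le n$: $k_j=0$ and $\beta^{(j)}=0$ for $1\le j\le n-s$; $k_j>0$ for $n-s+1\le j\le n$; $0\prec\beta^{(n-s+1)}\prec\dots\prec\beta^{(n)}$; and $\sum_jk_j=r$, $\sum_jk_j\beta^{(j)}=\beta$ (this is the index set of the multivariate Faà di Bruno formula). *)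

(* Defs.v *)
From mathcomp Require Import all_boot all_order all_algebra.
Set Implicit Arguments. Unset Strict Implicit. Unset Printing Implicit Defensive.
Import Order.TTheory GRing.Theory Num.Theory.

(* Multi-indices in N^d are represented as functions 'I_d -> nat
   (coordinate i : 'I_d is the paper's coordinate i+1). *)

Definition mlen (d : nat) (a : 'I_d -> nat) : nat := \sum_(i < d) a i.

(* The existential over i : 'I_d covers both "gamma_1 < alpha_1" (i = 0)
   and "gamma_1 = alpha_1, ..., gamma_k = alpha_k, gamma_{k+1} < alpha_{k+1}"
   (i = k, 1 <= k < d). *)
Definition mprec (d : nat) (g a : 'I_d -> nat) : bool :=
  (mlen g < mlen a) ||
  ((mlen g == mlen a) &&
   [exists i : 'I_d, [forall j : 'I_d, (j < i) ==> (g j == a j)] && (g i < a i)]).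

(* Membership of (k_1,...,k_n; beta^(1),...,beta^(n)) in p(beta, r), with
   n = |beta|.  Index j : 'I_n stands for the paper's j+1.  *)
Definition in_pset (d : nat) (beta : 'I_d -> nat) (r : nat)
    (k : 'I_(mlen beta) -> nat) (bs : 'I_(mlen beta) -> 'I_d -> nat) : bool :=
  let n := mlen beta in
  [exists s : 'I_n.+1, [&& 1 <= s,
    [forall j : 'I_n, (j < n - s) ==> (k j == 0) && [forall i, bs j i == 0]],
    [forall j : 'I_n, (n - s <= j) ==> (0 < k j)],
    [forall j : 'I_n, (val j == n - s) ==> mprec (fun _ => 0) (bs j)],
    [forall j : 'I_n, forall j' : 'I_n,
       ((n - s <= j) && (val j' == (val j).+1)) ==> mprec (bs j) (bs j')],
    \sum_(j < n) k j == r &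
    [forall i : 'I_d, \sum_(j < n) k j * bs j i == beta i]]].

(* Finite carrier for the sum over p(beta, r): all entries bounded by n = |beta|.
   This loses nothing: for tuples in p(beta,r), k_j <= r <= n and each
   coordinate of beta^(j) is <= k_j beta^(j)_i <= beta_i <= n (or 0). *)
Definition ptuple (d : nat) (beta : 'I_d -> nat) : finType :=
  ({ffun 'I_(mlen beta) -> 'I_(mlen beta).+1} *
   {ffun 'I_(mlen beta) -> {ffun 'I_d -> 'I_(mlen beta).+1}})%type.

Definition pk (d : nat) (beta : 'I_d -> nat) (x : ptuple beta) :
  'I_(mlen beta) -> nat := fun j => val (x.1 j).
Definition pbs (d : nat) (beta : 'I_d -> nat) (x : ptuple beta) :
  'I_(mlen beta) -> 'I_d -> nat := fun j i => val (x.2 j i).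

Definition faa_sum (d : nat) (beta : 'I_d -> nat) (r : nat) : rat :=
  \sum_(x : ptuple beta | @in_pset d beta r (pk x) (pbs x))
     ((r`!)%:R / (\prod_(j < mlen beta) ((pk x j)`!)%:R))%R.

(* Main.v *)
Require Import Defs.
From mathcomp Require Import all_boot all_order all_algebra.
From mathcomp Require Import zify ring lra.
Import Order.TTheory GRing.Theory Num.Theory.

Lemma mprec_irr d (g : 'I_d -> nat) : mprec g g = false.
Proof.
rewrite /mprec ltnn eqxx /=; apply/negbTE/existsPn => i.
by rewrite ltnn andbF.
Qed.

Lemma mprec_trans d (g a c : 'I_d -> nat) :
  mprec g a -> mprec a c -> mprec c g = false -> True.
Proof. by []. Qed.

Lemma mprec_trans' d (g a c : 'I_d -> nat) :
  mprec g a -> mprec a c -> mprec g c.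
Proof.
rewrite /mprec.
case/orP=> [H1|/andP[/eqP E1 /existsP[i1 /andP[/forallP F1 L1]]]];
case/orP=> [H2|/andP[/eqP E2 /existsP[i2 /andP[/forallP F2 L2]]]].
- by rewrite (ltn_trans H1 H2).
- by rewrite -E2 H1.
- by rewrite E1 H2.
apply/orP; right; rewrite E1 E2 eqxx /=.
have [lt12|ge12] := ltnP i1 i2.
  apply/existsP; exists i1; apply/andP; split.
    apply/forallP=> j; apply/implyP=> ji.
    rewrite (eqP (implyP (F1 j) ji)).
    exact: (implyP (F2 j) (ltn_trans ji lt12)).
  by rewrite -(eqP (implyP (F2 i1) lt12)).
apply/existsP; exists i2; apply/andP; split.
  apply/forallP=> j; apply/implyP=> ji.
  have ji1 : j < i1 by apply: leq_trans ji ge12.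
  rewrite (eqP (implyP (F1 j) ji1)).
  exact: (implyP (F2 j) ji).
move: ge12; rewrite leq_eqVlt => /orP[/eqP E|lt].
  have E' : i2 = i1 by apply: val_inj.
  by rewrite E' in L2 *; apply: ltn_trans L1 L2.
by rewrite (eqP (implyP (F1 i2) lt)).
Qed.

Set Implicit Arguments. Unset Strict Implicit. Unset Printing Implicit Defensive.

Definition Ut (d N : nat) := {ffun 'I_d -> 'I_N.+1}.
Definition Mt (d N L : nat) := {ffun Ut d N -> 'I_L.+1}.
Definition tot d N L (m : Mt d N L) : nat := \sum_(g : Ut d N) (m g : nat).
Definition vs d N L (m : Mt d N L) (i : 'I_d) : nat :=
  \sum_(g : Ut d N) m g * g i.
Definition z0 d N : Ut d N := [ffun _ => ord0].
Definition good d N L (b : 'I_d -> nat) (m : Mt d N L) : bool :=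
  (m (z0 d N) == 0 :> nat) && [forall i, vs m i == b i].
Definition wt d N L (m : Mt d N L) : rat :=
  ((tot m)`!%:R / (\prod_(g : Ut d N) ((m g)`!)%:R))%R.
Definition V d N L (b : 'I_d -> nat) : rat :=
  (\sum_(m : Mt d N L | good b m) wt m)%R.
Definition dec d N L (m : Mt d N L) (g : Ut d N) : Mt d N L :=
  [ffun h => if h == g then inord (m h).-1 else m h].

Lemma decE d N L (m : Mt d N L) g h :
  (dec m g h : nat) = if h == g then (m h).-1 else m h.
Proof.
rewrite /dec ffunE; case: eqP => // _.
rewrite inordK //; have := ltn_ord (m h); lia.
Qed.

Lemma tot_dec d N L (m : Mt d N L) g : 0 < m g -> tot (dec m g) = (tot m).-1.
Proof.
move=> mg; rewrite /tot (bigD1 g) //= [in RHS](bigD1 g) //= decE eqxx.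
rewrite (eq_bigr (fun h => (m h : nat))); last first.
  by move=> h /negbTE hg; rewrite decE hg.
move: mg; set S := (\sum_(i | _) _)%N; lia.
Qed.

Lemma prod_dec d N L (m : Mt d N L) g : 0 < m g ->
  (\prod_h (m h)`! = m g * \prod_h (dec m g h)`!)%N.
Proof.
move=> mg; rewrite (bigD1 g) //= [in RHS](bigD1 g) //= decE eqxx.
rewrite [in RHS](eq_bigr (fun h => (m h)`!) (P := fun h => h != g)); last first.
  by move=> h /negbTE hg; rewrite decE hg.
rewrite mulnA; congr (_ * _).
by case: (nat_of_ord (m g)) mg => //= k _; rewrite factS.
Qed.

Lemma wt_pascal d N L (m : Mt d N L) : 0 < tot m ->
  wt m = (\sum_(g | (0 < m g)%N) wt (dec m g))%R.
Proof.
move=> t0.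
rewrite (eq_bigr (fun g => (m g)%:R * ((tot m).-1`!%:R / (\prod_h ((m h)`!)%:R)))%R); last first.
  move=> g mg; rewrite /wt tot_dec // -!natr_prod (prod_dec mg) natrM.
  have Hg : ((m g)%:R : rat) != 0%R by rewrite pnatr_eq0 -lt0n.
  rewrite invfM [in RHS]mulrCA [in RHS]mulrA -[in RHS]mulrA (mulrA ((m g)%:R)%R) mulfV //.
  by rewrite mul1r.
rewrite -big_distrl /=.
have -> : (\sum_(i | (0 < m i)%N) ((m i)%:R : rat) = (tot m)%:R)%R.
  rewrite /tot natr_sum [in RHS](bigID (fun g => 0 < m g) predT) /=.
  rewrite [X in (_ + X)%R]big1 ?addr0 //.
  by move=> g; rewrite lt0n negbK => /eqP ->.
rewrite /wt; case: (tot m) t0 => // t _ /=.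
by rewrite factS natrM mulrA.
Qed.

Lemma wt_ge0 d N L (m : Mt d N L) : (0 <= wt m)%R.
Proof. apply: divr_ge0; [exact: ler0n | apply: prodr_ge0 => *; exact: ler0n]. Qed.

Lemma good_le d N L b (m : Mt d N L) g i :
  good b m -> 0 < m g -> g i <= b i.
Proof.
case/andP=> _ /forallP/(_ i)/eqP <- mg.
rewrite /vs (bigD1 g) //=; apply: leq_trans (leq_addr _ _).
by rewrite leq_pmull.
Qed.

Lemma tot0 d N L (m : Mt d N L) g : tot m = 0 -> m g = 0 :> nat.
Proof.
rewrite /tot (bigD1 g) //=; lia.
Qed.

Lemma vs_dec d N L (m : Mt d N L) g i : 0 < m g ->
  vs (dec m g) i = vs m i - g i.
Proof.
move=> mg; rewrite /vs (bigD1 g) //= [in RHS](bigD1 g) //= decE eqxx.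
rewrite [in LHS](eq_bigr (fun h => m h * h i)); last first.
  by move=> h /negbTE hg; rewrite decE hg.
set S := (\sum_(i0 | _) _)%N; case: (nat_of_ord (m g)) mg => // k _ /=.
rewrite mulSn; lia.
Qed.

Lemma dec_inj d N L (g : Ut d N) (m m' : Mt d N L) :
  0 < m g -> 0 < m' g -> dec m g = dec m' g -> m = m'.
Proof.
move=> mg m'g E; apply/ffunP=> h; apply: val_inj.
have := congr1 (fun f : Mt d N L => (f h : nat)) E; rewrite /= !decE.
case: eqP => [->|//].
case: (nat_of_ord (m g)) mg => // a _; case: (nat_of_ord (m' g)) m'g => // c _ /=.
by move=> ->.
Qed.

Lemma sum_sub_le (T : finType) (P Q : pred T) (F : T -> rat) :
  (forall x, P x -> Q x) -> (forall x, Q x -> 0 <= F x)%R ->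
  (\sum_(x | P x) F x <= \sum_(x | Q x) F x)%R.
Proof.
move=> PQ F0; rewrite [X in (X <= _)%R]big_mkcond [X in (_ <= X)%R]big_mkcond.
apply: ler_sum => x _; case Px: (P x); first by rewrite (PQ _ Px).
by case Qx: (Q x) => //; apply: F0.
Qed.

Definition bsub d (b : 'I_d -> nat) N (g : Ut d N) : 'I_d -> nat :=
  fun i => b i - g i.

Lemma V_step_g d N L (b : 'I_d -> nat) (g : Ut d N) : g != z0 d N ->
  (\sum_(m : Mt d N L | good b m && (0 < m g)%N) wt (dec m g) <= V N L (bsub b g))%R.
Proof.
move=> gz.
rewrite -(big_imset (fun m' => wt m') (h := fun m => dec m g)); last first.
  by move=> m m' /andP[_ mg] /andP[_ m'g]; exact: dec_inj.
apply: sum_sub_le; last by move=> *; exact: wt_ge0.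
move=> m' /imsetP[m]; move=> /andP[/andP[mz /forallP Hv] mg] ->.
apply/andP; split.
  by rewrite decE (eq_sym (z0 d N)) (negbTE gz).
apply/forallP => i; rewrite vs_dec // (eqP (Hv i)) /bsub //.
Qed.

Lemma V_step d N L (b : 'I_d -> nat) i0 : b i0 != 0 ->
  (V N L b <= \sum_(g : Ut d N | (g != z0 d N) && [forall i, (g i <= b i)%N])
                V N L (bsub b g))%R.
Proof.
move=> bi0.
rewrite /V.
rewrite (eq_bigr (fun m : Mt d N L => \sum_(g | (0 < m g)%N) wt (dec m g))%R); last first.
  move=> m gm; apply: wt_pascal; rewrite lt0n; apply/negP => /eqP t0.
  move: gm => /andP[_ /forallP/(_ i0)/eqP Hb]; move: bi0; rewrite -Hb /vs.
  by rewrite big1 // => g _; rewrite (tot0 g t0).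
rewrite (exchange_big_dep predT) //=.
rewrite (bigID (fun g => (g != z0 d N) && [forall i, g i <= b i])) /=.
rewrite [X in (_ + X)%R]big1 ?addr0; last first.
  move=> g Hg; apply: big_pred0 => m; apply/negbTE/negP => /andP[Hm mg].
  move/negP: Hg; apply; apply/andP; split.
    by apply/eqP => E; move: Hm mg; rewrite E => /andP[/eqP -> _].
  by apply/forallP => i; apply: good_le Hm mg.
apply: ler_sum => g /andP[gz _]; exact: V_step_g.
Qed.

Definition gl d N (g : Ut d N) : nat := \sum_i (g i : nat).

Lemma bernoulli (q : rat) n : (0 <= q)%R -> (q <= 1)%R ->
  (1 - n%:R * q <= (1 - q) ^+ n)%R.
Proof.
move=> q0 q1; elim: n => [|n IH]; first by rewrite mul0r subr0 expr0.
rewrite exprS -natr1.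
have h1 : (0 <= 1 - q)%R by lra.
have h2 : (0 <= n%:R * q)%R by apply: mulr_ge0 => //; exact: ler0n.
nra.
Qed.

Lemma two_d d : 0 < d -> d.*2 <= 2 ^ d.
Proof.
case: d => // d _; elim: d => // d IH.
rewrite expnS doubleS; move: IH; rewrite expnS; lia.
Qed.

Lemma geom_le (q : rat) M : (0 <= q)%R -> (q < 1)%R ->
  ((\sum_(c < M) q ^+ c) * (1 - q) <= 1)%R.
Proof.
move=> q0 q1.
have := subrXX 1 q M; rewrite expr1n.
rewrite (eq_bigr (fun c : 'I_M => q ^+ c)%R); last by move=> c _; rewrite expr1n mul1r.
move=> E; rewrite mulrC -E.
have : (0 <= q ^+ M)%R by apply: exprn_ge0.
lra.
Qed.

Lemma sum_q_le d N : 0 < d ->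
  (\sum_(g : Ut d N | g != z0 d N) (((2 ^ d)%:R : rat)^-1) ^+ gl g <= 1)%R.
Proof.
move=> d0.
set q := (((2 ^ d)%:R : rat)^-1)%R.
have Kpos : (0 < ((2 ^ d)%:R : rat))%R by rewrite ltr0n expn_gt0.
have q0 : (0 <= q)%R by rewrite invr_ge0 ltW.
have q1 : (q < 1)%R.
  rewrite /q invf_lt1 // ltr1n.
  by have := two_d d0; rewrite -addnn; lia.
set S := (\sum_(c < N.+1) q ^+ c)%R.
have E : (\sum_(g : Ut d N) q ^+ gl g = S ^+ d)%R.
  rewrite -[in RHS](card_ord d) -prodr_const.
  rewrite /S bigA_distr_bigA /=.
  apply: eq_bigr => g _; rewrite /gl.
  by rewrite (big_morph (fun n => q ^+ n)%R (exprD q) (expr0 q)).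
have Ez : (\sum_(g : Ut d N) q ^+ gl g = 1 + \sum_(g : Ut d N | g != z0 d N) q ^+ gl g)%R.
  rewrite (bigD1 (z0 d N)) //=; congr (_ + _)%R.
  rewrite /gl big1 ?expr0 // => i _; by rewrite ffunE.
have Sge0 : (0 <= S)%R by apply: sumr_ge0 => c _; exact: exprn_ge0.
have HS := geom_le N.+1 q0 q1; rewrite -/S in HS.
have B := bernoulli d q0 (ltW q1).
have dq : (d%:R * q <= 1/2)%R.
  have := two_d d0; rewrite -addnn => H.
  have H' : ((d%:R : rat) + d%:R <= (2 ^ d)%:R)%R by rewrite -natrD ler_nat.
  rewrite /q ler_pdivrMr //; lra.
have SB : (S ^+ d * (1 - q) ^+ d <= 1)%R.
  rewrite -exprMn; apply: exprn_ile1 => //; apply: mulr_ge0 => //; lra.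
have Sd0 : (0 <= S ^+ d)%R by apply: exprn_ge0.
have : (S ^+ d <= 2)%R by nra.
lra.
Qed.

Lemma V_base d N L (b : 'I_d -> nat) : mlen b = 0 -> (V N L b <= 1)%R.
Proof.
move=> b0.
have bz : forall i, b i = 0 by move=> i; move: b0; rewrite /mlen (bigD1 i) //=; lia.
pose m0 : Mt d N L := [ffun _ => ord0].
have Hs : forall m : Mt d N L, good b m -> pred1 m0 m.
  move=> m Hm /=; apply/eqP/ffunP => g; rewrite ffunE; apply: val_inj => /=.
  case: (boolP (g == z0 d N)) => [/eqP ->|gz]; first by case/andP: Hm => /eqP.
  have [i gi] : exists i, g i != 0 :> nat.
    apply/existsP; apply: contraR gz => /existsPn H; apply/eqP/ffunP => i.
    by apply: val_inj; move: (H i); rewrite ffunE negbK => /eqP.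
  apply/eqP; apply: contraR gi; rewrite -lt0n => mg.
  by have := good_le i Hm mg; rewrite bz leqn0.
apply: le_trans (sum_sub_le Hs (fun m _ => wt_ge0 m)) _.
rewrite big_pred1_eq /wt.
have -> : tot m0 = 0 by rewrite /tot big1 // => g _; rewrite ffunE.
by rewrite big1 ?divr1 // => g _; rewrite ffunE.
Qed.

Lemma V_bound d N L : 0 < d -> forall b : 'I_d -> nat,
  (V N L b <= ((2 ^ d)%:R : rat) ^+ mlen b)%R.
Proof.
move=> d0 b.
set K := ((2 ^ d)%:R : rat).
have Kpos : (0 < K)%R by rewrite ltr0n expn_gt0.
move: {2}(mlen b) (leqnn (mlen b)) => n; elim: n b => [|n IH] b Hb.
  have b0 : mlen b = 0 by lia.
  by rewrite b0 expr0; apply: V_base.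
have [b0|bn0] := eqVneq (mlen b) 0.
  by rewrite b0 expr0; apply: V_base.
have [i0 bi0] : exists i, b i != 0.
  apply/existsP; apply: contraR bn0 => /existsPn H.
  by rewrite /mlen big1 // => i _; move: (H i); rewrite negbK => /eqP.
apply: le_trans (@V_step d N L b i0 bi0) _.
apply: (@le_trans _ _ (\sum_(g : Ut d N | g != z0 d N) K ^+ mlen b * K^-1 ^+ gl g)%R).
  apply: (@le_trans _ _ (\sum_(g : Ut d N | (g != z0 d N) && [forall i, (g i <= b i)%N]) K ^+ mlen b * K^-1 ^+ gl g)%R); last first.
    apply: sum_sub_le => [g /andP[] //|g _].
    by apply: mulr_ge0; apply: exprn_ge0 => //; rewrite ?invr_ge0 ltW.
  apply: ler_sum => g /andP[gz /forallP gb].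
  have Eml : mlen (bsub b g) = mlen b - gl g.
    by rewrite /mlen /bsub /gl sumnB // => i _; exact: gb.
  have glb : gl g <= mlen b by rewrite /gl /mlen; apply: leq_sum => i _; exact: gb.
  have gl0 : 0 < gl g.
    rewrite lt0n; apply: contra gz => /eqP H; apply/eqP/ffunP => i; apply: val_inj.
    by move: H; rewrite /gl (bigD1 i) //= ffunE /=; lia.
  apply: le_trans (IH _ _) _; first by rewrite Eml; lia.
  have EK : (K ^+ mlen b = K ^+ (mlen b - gl g) * K ^+ gl g)%R by rewrite -exprD subnK.
  rewrite Eml exprVn EK mulfK //.
  by rewrite expf_neq0 // lt0r_neq0.
rewrite -big_distrr /= -[X in (_ <= X)%R]mulr1.
apply: ler_wpM2l; first by apply: exprn_ge0; exact: ltW.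
exact: sum_q_le.
Qed.


Lemma mprec_ext d (g g' a a' : 'I_d -> nat) :
  (forall i, g i = g' i) -> (forall i, a i = a' i) -> mprec g a = mprec g' a'.
Proof.
move=> Eg Ea; rewrite /mprec /mlen (eq_bigr _ (fun i _ => Eg i)) (eq_bigr _ (fun i _ => Ea i)).
congr (_ || (_ && _)); apply: eq_existsb => i; rewrite Eg Ea; congr (_ && _).
by apply: eq_forallb => j; rewrite Eg Ea.
Qed.

Lemma chain_gen n A (R : rel A) (f : 'I_n -> A) (t : nat) :
  (forall x y z, R x y -> R y z -> R x z) ->
  (forall j j' : 'I_n, t <= j -> (j' : nat) = (j : nat).+1 -> R (f j) (f j')) ->
  forall j j' : 'I_n, t <= j -> j < j' -> R (f j) (f j').
Proof.
move=> Rt H j j' tj jj'.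
have [k Ek] : exists k, (j' : nat) = j + k.+1 by exists (j' - j.+1); lia.
clear jj'; elim: k j' Ek => [|k IH] j' Ek; first by apply: H => //; lia.
have lt : j + k.+1 < n by have := ltn_ord j'; lia.
apply: (Rt _ (f (Ordinal lt))); first by apply: IH.
by apply: H => /=; lia.
Qed.


Lemma pset_facts d (beta : 'I_d -> nat) r (x : ptuple beta) :
  @in_pset d beta r (pk x) (pbs x) ->
  [/\ (forall j, pk x j = 0 -> x.2 j = z0 d (mlen beta)),
      (forall j, 0 < pk x j -> mprec (fun _ => 0) (pbs x j)),
      (forall j j' : 'I_(mlen beta), 0 < pk x j -> j < j' -> (0 < pk x j') && mprec (pbs x j) (pbs x j')),
      \sum_j pk x j = r &
      (forall i, \sum_j pk x j * pbs x j i = beta i)].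
Proof.
case/existsP => s /and5P[s1 /forallP H1 /forallP H2 /forallP H3 /and3P[/forallP H4 /eqP Hr /forallP Hb]].
set n := mlen beta. set t := n - s.
have act : forall j : 'I_n, (0 < pk x j) = (t <= j).
  move=> j; case: (leqP t j) => tj.
    by have := implyP (H2 j) tj.
  by have /andP[/eqP -> _] := implyP (H1 j) tj.
have ch : forall j j' : 'I_n, t <= j -> j < j' -> mprec (pbs x j) (pbs x j').
  apply: (chain_gen (R := fun a b => mprec a b)); first exact: mprec_trans'.
  move=> j j' tj Ej; apply: (implyP (forallP (H4 j) j')).
  by rewrite tj /=; apply/eqP.
split => //.
- move=> j kj0; have : ~~ (t <= j) by rewrite -act kj0.
  rewrite -ltnNge => tj; have /andP[_ /forallP Z] := implyP (H1 j) tj.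
  by apply/ffunP => i; apply: val_inj; rewrite ffunE /=; apply/eqP; exact: Z i.
- move=> j; rewrite act => tj.
  have tn : t < n by have := ltn_ord j; lia.
  have H0 := implyP (H3 (Ordinal tn)) (eqxx _).
  case: (ltnP t j) => [ltj|jt].
    exact: (mprec_trans' _ _ _ _ H0 (ch (Ordinal tn) j (leqnn _) ltj)).
  have Ej : j = Ordinal tn by apply: val_inj => /=; lia.
  by rewrite Ej.
- move=> j j'; rewrite act => tj jj'.
  by rewrite act (ch _ _ tj jj') andbT; apply: leq_trans tj (ltnW jj').
- by move=> i; apply/eqP.
Qed.

Lemma prod_fact_single (I : finType) (P : pred I) (k : I -> nat) :
  (forall j j', P j -> P j' -> 0 < k j -> 0 < k j' -> j = j') ->
  \prod_(j | P j) (k j)`! = (\sum_(j | P j) k j)`!.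
Proof.
move=> H.
case: (pickP (fun j => P j && (0 < k j))) => [j0 /andP[Pj0 kj0] | none].
  rewrite (bigD1 j0) //= [in RHS](bigD1 j0) //=.
  have Z : forall j, P j && (j != j0) -> k j = 0.
    move=> j /andP[Pj jj0]; apply/eqP; rewrite -leqn0 leqNgt; apply/negP => kj.
    by move/eqP: jj0; apply; apply: H.
  rewrite big1; last by move=> j /Z ->.
  by rewrite big1 ?addn0 ?muln1 // => j /Z ->.
rewrite big1; last first.
  by move=> j Pj; move: (none j); rewrite Pj /= => /negbT; rewrite -leqNgt leqn0 => /eqP ->.
rewrite big1 //.
by move=> j Pj; move: (none j); rewrite Pj /= => /negbT; rewrite -leqNgt leqn0 => /eqP ->.
Qed.

Definition mx d (beta : 'I_d -> nat) (x : ptuple beta) :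
    Mt d (mlen beta) (mlen beta * mlen beta) :=
  [ffun g => inord (\sum_(j | x.2 j == g) pk x j)].

Lemma mxE d (beta : 'I_d -> nat) (x : ptuple beta) g :
  (mx x g : nat) = \sum_(j | x.2 j == g) pk x j.
Proof.
rewrite ffunE inordK // ltnS.
apply: (@leq_trans (\sum_(j < mlen beta) mlen beta)).
  rewrite [X in X <= _]big_mkcond /=; apply: leq_sum => j _.
  by case: ifP => // _; rewrite /pk -ltnS ltn_ord.
by rewrite sum_nat_const card_ord.
Qed.


Lemma pdist d (beta : 'I_d -> nat) r (x : ptuple beta) :
  @in_pset d beta r (pk x) (pbs x) ->
  forall j j' : 'I_(mlen beta), 0 < pk x j -> 0 < pk x j' -> x.2 j = x.2 j' -> j = j'.
Proof.
case/pset_facts => _ _ F3 _ _.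
have key : forall j j' : 'I_(mlen beta), 0 < pk x j -> j < j' -> x.2 j = x.2 j' -> False.
  move=> j j' kj jj' E; have /andP[_ M] := F3 j j' kj jj'.
  by move: M; rewrite /pbs -E mprec_irr.
move=> j j' kj kj' E; case: (ltngtP j j') => [lt|lt|eq].
- by case: (key _ _ kj lt E).
- by case: (key _ _ kj' lt (esym E)).
- exact: val_inj.
Qed.

Lemma mx_act d (beta : 'I_d -> nat) r (x : ptuple beta) :
  @in_pset d beta r (pk x) (pbs x) ->
  forall j, 0 < pk x j -> (mx x (x.2 j) : nat) = pk x j.
Proof.
move=> P j kj; rewrite mxE (bigD1 j) //= big1 ?addn0 // => j' /andP[/eqP E jj'].
apply/eqP; rewrite -leqn0 leqNgt; apply/negP => kj'.
by move/eqP: jj'; apply; apply: (pdist P).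
Qed.

Lemma mx_pos d (beta : 'I_d -> nat) (x : ptuple beta) g :
  0 < mx x g -> exists j, 0 < pk x j /\ x.2 j = g.
Proof.
rewrite mxE => H.
case: (pickP (fun j => (x.2 j == g) && (0 < pk x j))) => [j /andP[/eqP E kj]|none].
  by exists j.
move: H; rewrite big1 // => j E; move: (none j); rewrite E /= => /negbT.
by rewrite -leqNgt leqn0 => /eqP.
Qed.

Lemma mx_facts d (beta : 'I_d -> nat) r (x : ptuple beta) :
  @in_pset d beta r (pk x) (pbs x) ->
  [/\ good beta (mx x), tot (mx x) = r &
      \prod_g (mx x g)`! = \prod_j (pk x j)`!].
Proof.
move=> P; have [F1 F2 F3 Fr Fb] := pset_facts P.
split.
- apply/andP; split.
    rewrite mxE big1 // => j /eqP E; apply/eqP; rewrite -leqn0 leqNgt; apply/negP => kj.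
    have := F2 j kj; rewrite (@mprec_ext _ _ (fun _ => 0) _ (fun _ => 0)) ?mprec_irr //.
    by move=> i; rewrite /pbs E ffunE.
  apply/forallP => i; rewrite -(Fb i) /vs.
  rewrite (partition_big (fun j => x.2 j) predT) //=.
  apply/eqP; apply: eq_bigr => g _; rewrite mxE big_distrl /=.
  by apply: eq_bigr => j /eqP E; rewrite /pbs E.
- rewrite /tot -Fr (partition_big (fun j => x.2 j) predT) //=.
  by apply: eq_bigr => g _; rewrite mxE.
- rewrite (partition_big (fun j => x.2 j) predT) //=.
  apply: eq_bigr => g _; rewrite mxE; symmetry; apply: prod_fact_single.
  move=> j j' /eqP E /eqP E' kj kj'; apply: (pdist P) => //.
  by rewrite E E'.
Qed.

Definition rkset d N L (m : Mt d N L) (h : Ut d N) : {set Ut d N} :=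
  [set g | (0 < m g) && mprec (fun i => (h i : nat)) (fun i => (g i : nat))].

Lemma rank_card d (beta : 'I_d -> nat) r (x : ptuple beta) j :
  @in_pset d beta r (pk x) (pbs x) -> 0 < pk x j ->
  #|rkset (mx x) (x.2 j)| = #|[set j' : 'I_(mlen beta) | j < j']|.
Proof.
move=> P kj; have [F1 F2 F3 Fr Fb] := pset_facts P.
rewrite -(@card_in_imset _ _ (fun j' => x.2 j')); last first.
  move=> j1 j2; rewrite !inE => l1 l2; apply: (pdist P).
  - by case/andP: (F3 _ _ kj l1).
  - by case/andP: (F3 _ _ kj l2).
apply: eq_card => g; rewrite !inE; apply/andP/imsetP.
  case=> /mx_pos [j' [kj' <-]] M; exists j' => //; rewrite inE.
  case: (ltngtP j j') => [//|lt|eq].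
    have /andP[_ M'] := F3 _ _ kj' lt.
    by move: (mprec_trans' _ _ _ _ M M'); rewrite mprec_irr.
  move: M; have -> : j' = j by apply: val_inj; exact: (esym eq).
  by rewrite mprec_irr.
case=> j'; rewrite inE => lt ->.
have /andP[kj' M] := F3 _ _ kj lt; split => //.
by rewrite (mx_act P kj').
Qed.

Lemma gt_card_inj n (j j' : 'I_n) :
  #|[set i : 'I_n | j < i]| = #|[set i : 'I_n | j' < i]| -> j = j'.
Proof.
have key : forall a b : 'I_n, a < b -> #|[set i : 'I_n | b < i]| < #|[set i : 'I_n | a < i]|.
  move=> a b ab; apply: proper_card; apply/properP; split.
    by apply/subsetP => i; rewrite !inE => bi; apply: ltn_trans ab bi.
  by exists b; rewrite !inE ?ltnn.
move=> E; case: (ltngtP j j') => [lt|lt|eq].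
- by move: (key _ _ lt); rewrite E ltnn.
- by move: (key _ _ lt); rewrite E ltnn.
- exact: val_inj.
Qed.

Lemma mx_key d (beta : 'I_d -> nat) r (x y : ptuple beta) :
  @in_pset d beta r (pk x) (pbs x) -> @in_pset d beta r (pk y) (pbs y) ->
  mx x = mx y -> forall j, 0 < pk x j -> 0 < pk y j /\ y.2 j = x.2 j.
Proof.
move=> Px Py E j kj.
have : 0 < mx y (x.2 j) by rewrite -E (mx_act Px kj).
case/mx_pos => j' [kj' Ej'].
have := rank_card Px kj; rewrite E -Ej' (rank_card Py kj') => /gt_card_inj Ejj.
by rewrite Ejj in kj' Ej' *; split.
Qed.

Lemma mx_inj d (beta : 'I_d -> nat) r (x y : ptuple beta) :
  @in_pset d beta r (pk x) (pbs x) -> @in_pset d beta r (pk y) (pbs y) ->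
  mx x = mx y -> x = y.
Proof.
move=> Px Py E.
have [F1x _ _ _ _] := pset_facts Px.
have [F1y _ _ _ _] := pset_facts Py.
have H : forall j, pk x j = pk y j /\ x.2 j = y.2 j.
  move=> j; case: (posnP (pk x j)) => [kx0|kx].
    case: (posnP (pk y j)) => [ky0|ky].
      by rewrite kx0 ky0 (F1x _ kx0) (F1y _ ky0).
    have [kx' _] := mx_key Py Px (esym E) ky.
    by move: kx'; rewrite kx0.
  have [ky Ey] := mx_key Px Py E kx.
  split => //; rewrite -(mx_act Px kx) -(mx_act Py ky) E Ey //.
move: x y Px Py E H F1x F1y => [x1 x2] [y1 y2] /= _ _ _ H _ _.
congr pair; apply/ffunP => j; have [H1 H2] := H j => //.
exact: val_inj.
Qed.


Lemma faa_le d (beta : 'I_d -> nat) r :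
  (faa_sum beta r <= \sum_(m : Mt d (mlen beta) (mlen beta * mlen beta) |
                            good beta m && (tot m == r)) wt m)%R.
Proof.
rewrite /faa_sum.
rewrite (eq_bigr (fun x => wt (mx x))); last first.
  move=> x P; have [_ Et Ep] := mx_facts P.
  by rewrite /wt Et -!natr_prod Ep.
rewrite -(big_imset (fun m => wt m) (h := @mx d beta)); last first.
  by move=> x y Px Py E; exact: (mx_inj Px Py E).
apply: (sum_sub_le (P := fun m => m \in _)); last by move=> *; exact: wt_ge0.
move=> m /imsetP[x Px ->]; have [Hg Et _] := mx_facts Px.
by rewrite Hg Et eqxx.
Qed.

Lemma sum_seq_single (s : seq nat) t (w : rat) : uniq s -> (0 <= w)%R ->
  (\sum_(r <- s) (if t == r then w else 0) <= w)%R.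
Proof.
elim: s => [|a s IH] /=; first by rewrite big_nil.
case/andP=> as_ us w0; rewrite big_cons.
case: (eqVneq t a) => [Eta|_]; last by rewrite add0r; apply: IH.
rewrite big1_seq ?addr0 // => r /andP[_ rs].
case: (eqVneq t r) => // Er; move: as_; by rewrite -Eta Er rs.
Qed.

Lemma binn_le n r : 'C(n, r) <= 2 ^ n.
Proof.
elim: n r => [|n IH] r; first by case: r.
case: r => [|r]; first by rewrite bin0 expn_gt0.
by rewrite binS expnS mul2n -addnn leq_add.
Qed.

Local Open Scope ring_scope.

Theorem lemma7p4 (d : nat) (beta : 'I_d -> nat) :
  (exists i : 'I_d, beta i != 0%N) ->
  \sum_(1 <= r < (mlen beta).+1) ('C(mlen beta, r))%:R * faa_sum beta r
    <= (2%:R : rat) ^+ (mlen beta * d.+1).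
Proof.
case=> i0 _.
have d0 : (0 < d)%N by case: d i0 beta => [[]|].
set n := mlen beta.
set S := fun r => \sum_(m : Mt d n (n * n) | good beta m && (tot m == r)) wt m.
have faa0 : forall r, 0 <= faa_sum beta r.
  move=> r; apply: sumr_ge0 => x _; apply: divr_ge0; first exact: ler0n.
  by apply: prodr_ge0 => *; exact: ler0n.
apply: (@le_trans _ _ (\sum_(1 <= r < n.+1) (2 ^ n)%:R * S r)).
  apply: ler_sum => r _; apply: ler_pM => //.
    by rewrite ler_nat binn_le.
  exact: faa_le.
rewrite -big_distrr /=.
have HS : \sum_(1 <= r < n.+1) S r <= V n (n * n) beta.
  rewrite /S /V.
  rewrite (eq_bigr (fun r => \sum_(m : Mt d n (n * n)) (if good beta m && (tot m == r) then wt m else 0))); last first.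
    by move=> r _; rewrite big_mkcond.
  rewrite exchange_big /= [X in _ <= X]big_mkcond /=.
  apply: ler_sum => m _; case: (good beta m) => /=.
    apply: sum_seq_single; first exact: iota_uniq.
    exact: wt_ge0.
  by rewrite big1.
have HV := V_bound n (n * n) d0 beta.
apply: (@le_trans _ _ ((2 ^ n)%:R * ((2 ^ d)%:R ^+ n))).
  apply: ler_wpM2l; first exact: ler0n.
  exact: le_trans HS HV.
rewrite -natrX -natrM -natrX ler_nat -expnM -expnD.
by rewrite mulnS mulnC.
Qed.
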